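(* Let $(X,d)$ be a metric space, $x_0\in X$, $n\geq 1$, and let $e$ be the identity of $\pi_n(X,x_0)$. For all $a,b\in\pi_n(X,x_0)$, $\rho(ab,e)\leq\max\{\rho(a,e),\rho(b,e)\}$.
   Context: $\Omega^n(X,x_0)$ is the set of continuous maps $\alpha:[0,1]^n\to X$ with $\alpha(\partial[0,1]^n)=\{x_0\}$, with uniform metric $\mu(\alpha,\beta)=\sup_{t\in[0,1]^n}d(\alpha(t),\beta(t))$. For $a,b\in\pi_n(X,x_0)$, $\rho(a,b)=\inf\{\mu(\alpha,\beta)\mid\alpha\in a,\beta\in b\}$. *)

(* Defs.v *)
From HB Require Import structures.
From mathcomp Require Import all_boot all_order all_algebra.
From mathcomp Require Import all_classical all_reals ereal.
Set Implicit Arguments. Unset Strict Implicit. Unset Printing Implicit Defensive.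
Import Order.TTheory GRing.Theory Num.Theory.
Local Open Scope classical_set_scope.
Local Open Scope ring_scope.

Section HomotopyDefs.
Variables (R : realType) (X : Type) (d : X -> X -> R).

Definition is_metric : Prop :=
  (forall x y, 0 <= d x y) /\ (forall x y, d x y = 0 <-> x = y) /\
  (forall x y, d x y = d y x) /\ (forall x y z, d x z <= d x y + d y z).

Variable n : nat.
Definition pt := 'I_n -> R.

Definition cube : set pt := [set t | forall i, 0 <= t i <= 1].
Definition bdry : set pt :=
  [set t | cube t /\ exists i, t i = 0 \/ t i = 1].

Definition supdist (s t : pt) : R := \big[Num.max/0]_i `|s i - t i|.
Definition pdist (p q : R * pt) : R := Num.max `|p.1 - q.1| (supdist p.2 q.2).

Definition cont_on (T : Type) (dT : T -> T -> R) (A : set T) (f : T -> X) :=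
  forall t, A t -> forall e, 0 < e -> exists2 del, 0 < del &
    forall u, A u -> dT t u < del -> d (f t) (f u) < e.

(* Omega^n(X,x0) : maps only matter on the cube *)
Definition Omega (x0 : X) (al : pt -> X) : Prop :=
  cont_on supdist cube al /\ (forall t, bdry t -> al t = x0).

Definition homotopic (x0 : X) (al be : pt -> X) : Prop :=
  exists H : R -> pt -> X,
    cont_on pdist [set p | 0 <= p.1 <= 1 /\ cube p.2] (fun p => H p.1 p.2) /\
    (forall t, cube t -> H 0 t = al t /\ H 1 t = be t) /\
    (forall s t, 0 <= s <= 1 -> bdry t -> H s t = x0).

Definition hclass (x0 : X) (al : pt -> X) : set (pt -> X) :=
  [set be | Omega x0 be /\ homotopic x0 al be].

Definition hgrp (x0 : X) : set (set (pt -> X)) :=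
  [set A | exists2 al, Omega x0 al & A = hclass x0 al].

Definition hgrp_e (x0 : X) : set (pt -> X) := hclass x0 (fun _ => x0).

Definition setc (t : pt) (i0 : 'I_n) (r : R) : pt :=
  fun i => if i == i0 then r else t i.
Definition concat (i0 : 'I_n) (al be : pt -> X) : pt -> X :=
  fun t => if t i0 <= 2^-1 then al (setc t i0 (2 * t i0))
           else be (setc t i0 (2 * t i0 - 1)).

Definition hgrp_mul (x0 : X) (i0 : 'I_n) (a b : set (pt -> X)) : set (pt -> X) :=
  [set ga | exists al be, a al /\ b be /\ Omega x0 ga /\
                          homotopic x0 (concat i0 al be) ga].

Definition mu_unif (al be : pt -> X) : \bar R :=
  ereal_sup [set (d (al t) (be t))%:E | t in cube].
Definition rho_pi (a b : set (pt -> X)) : \bar R :=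
  ereal_inf [set mu_unif al be | al in a & be in b].

End HomotopyDefs.

(* Main.v *)
Require Import Defs.
From HB Require Import structures.
From mathcomp Require Import all_boot all_order all_algebra.
From mathcomp Require Import all_classical all_reals ereal.
From mathcomp Require Import lra.
Import Order.TTheory GRing.Theory Num.Theory.
Local Open Scope classical_set_scope.
Local Open Scope ring_scope.
Set Implicit Arguments. Unset Strict Implicit. Unset Printing Implicit Defensive.

Lemma inf_max_aux (R : realType) (S T : set (\bar R)) (L : \bar R) :
  (forall x y, S x -> T y -> (L <= maxe x y)%E) ->
  forall x, S x -> (ereal_inf T <= x)%E -> (L <= x)%E.
Proof.
move=> H x Sx; rewrite le_eqVlt => /orP[/eqP E|lt].
  rewrite -E; apply: le_ereal_inf_tmp => y Ty.
  have := H x y Sx Ty; rewrite -E.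
  by have := ereal_inf_lbound Ty; move=> /max_idPr ->.
have [y Ty yx] := ereal_inf_lt lt.
by have := H x y Sx Ty; rewrite (max_idPl (ltW yx)).
Qed.

Lemma inf_max (R : realType) (S T : set (\bar R)) (L : \bar R) :
  (forall x y, S x -> T y -> (L <= maxe x y)%E) ->
  (L <= maxe (ereal_inf S) (ereal_inf T))%E.
Proof.
move=> H; case: (leP (ereal_inf T) (ereal_inf S)) => c.
   apply: le_ereal_inf_tmp => x Sx.
  apply: (inf_max_aux H Sx); apply: le_trans c _; exact: ereal_inf_lbound.
 apply: le_ereal_inf_tmp => y Ty.
have H' : forall x y, T x -> S y -> (L <= maxe x y)%E.
  by move=> a b Ta Sb; rewrite maxC; apply: H.
apply: (inf_max_aux H' Ty); apply: le_trans (ltW c) _; exact: ereal_inf_lbound.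
Qed.

Section Geo.
Variables (R : realType) (n : nat).

Lemma supdist_ge0 (s t : pt R n) : 0 <= supdist s t.
Proof.
rewrite /supdist; elim/big_ind: _ => //.
by move=> x y hx hy; rewrite le_max hx.
Qed.

Lemma le_supdist (s t : pt R n) i : `|s i - t i| <= supdist s t.
Proof. rewrite /supdist; exact: (le_bigmax _ _ i). Qed.

Lemma supdist_le (s t : pt R n) c : 0 <= c ->
  (forall i, `|s i - t i| <= c) -> supdist s t <= c.
Proof. by move=> c0 h; rewrite /supdist; apply: bigmax_le. Qed.

Lemma pdist_ge0 (p q : R * pt R n) : 0 <= pdist p q.
Proof. by rewrite /pdist le_max normr_ge0. Qed.

Lemma pdist1 (p q : R * pt R n) : `|p.1 - q.1| <= pdist p q.
Proof. by rewrite /pdist le_max lexx. Qed.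

Lemma pdist2 (p q : R * pt R n) : supdist p.2 q.2 <= pdist p q.
Proof. by rewrite /pdist le_max lexx orbT. Qed.

Lemma setc_cube (t : pt R n) i0 r : cube t -> 0 <= r <= 1 -> cube (setc t i0 r).
Proof. by move=> ht hr i; rewrite /setc; case: ifP. Qed.

Lemma supdist_setc (s t : pt R n) i0 x y c : 0 <= c -> `|x - y| <= c ->
  supdist s t <= c -> supdist (setc s i0 x) (setc t i0 y) <= c.
Proof.
move=> c0 hxy hst; apply: supdist_le => // i; rewrite /setc; case: ifP => // _.
exact: le_trans (le_supdist s t i) hst.
Qed.

Lemma norm_min2 (a b : R) :
  `|Num.min (2 * a) 1 - Num.min (2 * b) 1| <= 2 * `|a - b|.
Proof.
have h1 := ler_norm (a - b); have h2 := ler_norm (b - a); rewrite distrC in h2.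
rewrite ler_norml; case: (leP (2 * a) 1); case: (leP (2 * b) 1);
  move=> *; apply/andP; split; lra.
Qed.

Lemma norm_max2 (a b : R) :
  `|Num.max (2 * a - 1) 0 - Num.max (2 * b - 1) 0| <= 2 * `|a - b|.
Proof.
have h1 := ler_norm (a - b); have h2 := ler_norm (b - a); rewrite distrC in h2.
rewrite ler_norml; case: (leP (2 * a - 1) 0); case: (leP (2 * b - 1) 0);
  move=> *; apply/andP; split; lra.
Qed.

Section Cont.
Variables (X : Type) (d : X -> X -> R) (hd : is_metric d).

Lemma cont_on_ext T (dT : T -> T -> R) (D : set T) (f g : T -> X) :
  (forall p, D p -> f p = g p) -> cont_on d dT D f -> cont_on d dT D g.
Proof.
move=> fg hf t Dt e e0; have [del del0 h] := hf t Dt e e0.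
by exists del => // u Du tu; rewrite -!fg //; apply: h.
Qed.

Lemma paste_cont T (dT : T -> T -> R) (D : set T) (A B : T -> X) (c : T -> bool) x0 :
  cont_on d dT D A -> cont_on d dT D B ->
  (forall p, D p -> c p -> B p = x0) -> (forall p, D p -> ~~ c p -> A p = x0) ->
  cont_on d dT D (fun p => if c p then A p else B p).
Proof.
case: hd => [d0 [dE [dC dT3]]].
move=> hA hB hBc hAc t Dt e e0; have {}e0 : (0 : R) < e := e0.
have e20 : 0 < e / 2 by rewrite divr_gt0.
have [dA dA0 hA'] := hA t Dt _ e20; have [dB dB0 hB'] := hB t Dt _ e20.
exists (Num.min dA dB); first by rewrite lt_min dA0.
move=> u Du tu; have tuA : dT t u < dA by move: tu; rewrite lt_min => /andP[].
have tuB : dT t u < dB by move: tu; rewrite lt_min => /andP[].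
have := hA' u Du tuA; have := hB' u Du tuB => hb ha.
case ct: (c t); case cu: (c u).
- lra.
- rewrite (hAc u Du (negbT cu)) in ha; rewrite (hBc t Dt ct) in hb.
  apply: le_lt_trans (dT3 _ x0 _) _; lra.
- rewrite (hAc t Dt (negbT ct)) in ha; rewrite (hBc u Du cu) in hb.
  apply: le_lt_trans (dT3 _ x0 _) _; lra.
- lra.
Qed.

Lemma lip_cont T (dT : T -> T -> R) (D : set T) (f : T -> X) (phi : T -> T) :
  cont_on d dT D f -> (forall p, D p -> D (phi p)) ->
  (forall p q, dT (phi p) (phi q) <= 2 * dT p q) ->
  cont_on d dT D (f \o phi).
Proof.
move=> hf hD hL t Dt e e0; have {}e0 : (0 : R) < e := e0; have [del del0 h] := hf (phi t) (hD t Dt) e e0.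
exists (del / 2); first by rewrite divr_gt0.
move=> u Du tu /=; apply: h; first exact: hD.
apply: le_lt_trans (hL t u) _; lra.
Qed.


Variable i0 : 'I_n.
Definition DD : set (R * pt R n) := [set p | 0 <= p.1 <= 1 /\ cube p.2].
Definition phi1 (p : R * pt R n) := (p.1, setc p.2 i0 (Num.min (2 * p.2 i0) 1)).
Definition phi2 (p : R * pt R n) := (p.1, setc p.2 i0 (Num.max (2 * p.2 i0 - 1) 0)).

Lemma setc_at (t : pt R n) r : setc t i0 r i0 = r.
Proof. by rewrite /setc eqxx. Qed.

Lemma phi1_lip p q : pdist (phi1 p) (phi1 q) <= 2 * pdist p q.
Proof.
have h0 := pdist_ge0 p q; have h1 := pdist1 p q; have h2 := pdist2 p q.
have h3 := le_supdist p.2 q.2 i0; have h4 := norm_min2 (p.2 i0) (q.2 i0).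
rewrite [pdist (phi1 p) _]/pdist ge_max; apply/andP; split; first by rewrite /=; lra.
apply: supdist_setc => /=; lra.
Qed.

Lemma phi2_lip p q : pdist (phi2 p) (phi2 q) <= 2 * pdist p q.
Proof.
have h0 := pdist_ge0 p q; have h1 := pdist1 p q; have h2 := pdist2 p q.
have h3 := le_supdist p.2 q.2 i0; have h4 := norm_max2 (p.2 i0) (q.2 i0).
rewrite [pdist (phi2 p) _]/pdist ge_max; apply/andP; split; first by rewrite /=; lra.
apply: supdist_setc => /=; lra.
Qed.

Lemma phi1_D p : DD p -> DD (phi1 p).
Proof.
case=> hs ht; split => //=; apply: setc_cube => //.
have := ht i0; case/andP => a b; case: (leP (2 * p.2 i0) 1) => c; apply/andP; split; lra.
Qed.

Lemma phi2_D p : DD p -> DD (phi2 p).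
Proof.
case=> hs ht; split => //=; apply: setc_cube => //.
have := ht i0; case/andP => a b; case: (leP (2 * p.2 i0 - 1) 0) => c; apply/andP; split; lra.
Qed.

Lemma concat_cont (F G : R -> pt R n -> X) x0 :
  cont_on d (@pdist R n) DD (fun p => F p.1 p.2) -> cont_on d (@pdist R n) DD (fun p => G p.1 p.2) ->
  (forall s t, 0 <= s <= 1 -> cube t -> t i0 = 1 -> F s t = x0) ->
  (forall s t, 0 <= s <= 1 -> cube t -> t i0 = 0 -> G s t = x0) ->
  cont_on d (@pdist R n) DD (fun p => concat i0 (F p.1) (G p.1) p.2).
Proof.
move=> hF hG F1 G0.
pose A := (fun p : R * pt R n => F p.1 p.2) \o phi1.
pose B := (fun p : R * pt R n => G p.1 p.2) \o phi2.
apply: (@cont_on_ext _ _ _ (fun p => if p.2 i0 <= 2^-1 then A p else B p)).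
  move=> [s t] [hs ht]; rewrite /concat /A /B /phi1 /phi2 /=.
  have := ht i0; case/andP => a b.
  case: ifP => c.
    by rewrite (min_idPl _) //; lra.
  move/negbT: c; rewrite -ltNge => c.
  by rewrite (max_idPl _) //; lra.
apply: paste_cont.
- exact: lip_cont hF phi1_D phi1_lip.
- exact: lip_cont hG phi2_D phi2_lip.
- move=> [s t] Dp c; rewrite /B /phi2 /=; have [hs ht] := phi2_D Dp.
  apply: G0 => //.
  rewrite setc_at; apply/max_idPr; move: c => /=; lra.
- move=> [s t] Dp; rewrite -ltNge => c; rewrite /A /phi1 /=; have [hs ht] := phi1_D Dp.
  apply: F1 => //.
  rewrite setc_at; apply/min_idPr; move: c => /=; lra.
Qed.


Lemma lift_cont (f : pt R n -> X) :
  cont_on d (@supdist R n) (@cube R n) f -> cont_on d (@pdist R n) DD (fun p => f p.2).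
Proof.
move=> hf p [_ hp] e e0; have [del del0 h] := hf p.2 hp e e0.
exists del => // q [_ hq] pq; apply: h => //.
exact: le_lt_trans (pdist2 p q) pq.
Qed.

Lemma lower_cont (f : pt R n -> X) :
  cont_on d (@pdist R n) DD (fun p => f p.2) -> cont_on d (@supdist R n) (@cube R n) f.
Proof.
move=> hf t ht e e0.
have D0 : DD (0, t) by split => //=; rewrite lexx ler01.
have [del del0 h] := hf (0, t) D0 e e0.
exists del => // u hu tu.
have Du : DD (0, u) by split => //=; rewrite lexx ler01.
apply: (h (0, u) Du); rewrite /pdist /= subrr normr0.
by rewrite (max_idPr (supdist_ge0 t u)).
Qed.

Lemma branch1 (t : pt R n) : cube t -> t i0 <= 2^-1 -> 0 <= 2 * t i0 <= 1.
Proof. by move=> ht c; have := ht i0; case/andP => a b; apply/andP; split; lra. Qed.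

Lemma branch2 (t : pt R n) : cube t -> ~~ (t i0 <= 2^-1) -> 0 <= 2 * t i0 - 1 <= 1.
Proof.
by move=> ht; rewrite -ltNge => c; have := ht i0; case/andP => a b; apply/andP; split; lra.
Qed.

Lemma concat_bdry x0 (al be : pt R n -> X) t :
  (forall u, bdry u -> al u = x0) -> (forall u, bdry u -> be u = x0) ->
  bdry t -> concat i0 al be t = x0.
Proof.
move=> ha hb [ht [i hi]]; rewrite /concat; case: ifP => c.
  apply: ha; split; first exact: setc_cube (branch1 ht c).
  exists i; case: (eqVneq i i0) => [E|ne].
    subst i; rewrite setc_at; case: hi => hi; rewrite hi; first by left; rewrite mulr0.
    by move: c; rewrite hi; lra.
  by rewrite /setc (negbTE ne).
apply: hb; split; first exact: setc_cube (branch2 ht (negbT c)).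
exists i; case: (eqVneq i i0) => [E|ne].
  subst i; rewrite setc_at; case: hi => hi; rewrite hi.
    by move: c; rewrite hi; lra.
  by right; lra.
by rewrite /setc (negbTE ne).
Qed.

Lemma concat_ext (al be al' be' : pt R n -> X) t :
  (forall u, cube u -> al u = al' u) -> (forall u, cube u -> be u = be' u) ->
  cube t -> concat i0 al be t = concat i0 al' be' t.
Proof.
move=> ha hb ht; rewrite /concat; case: ifP => c.
  by apply: ha; apply: setc_cube (branch1 ht c).
by apply: hb; apply: setc_cube (branch2 ht (negbT c)).
Qed.

Lemma Omega_concat x0 (al be : pt R n -> X) :
  Omega d x0 al -> Omega d x0 be -> Omega d x0 (concat i0 al be).
Proof.
move=> [ca ba] [cb bb]; split; last by move=> t; apply: concat_bdry.
apply: lower_cont.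
apply: (@concat_cont (fun _ => al) (fun _ => be) x0).
- exact: lift_cont.
- exact: lift_cont.
- by move=> s t _ ht h1; apply: ba; split => //; exists i0; right.
- by move=> s t _ ht h1; apply: bb; split => //; exists i0; left.
Qed.

Lemma homotopic_refl x0 (al : pt R n -> X) : Omega d x0 al -> homotopic d x0 al al.
Proof.
move=> [ca ba]; exists (fun _ t => al t); split; first exact: lift_cont.
by split => // s t _; apply: ba.
Qed.

Lemma e_concat x0 (be be' : pt R n -> X) :
  hgrp_e d x0 be -> hgrp_e d x0 be' -> hgrp_e d x0 (concat i0 be be').
Proof.
move=> [ob [H1 [c1 [e1 b1]]]] [ob' [H2 [c2 [e2 b2]]]].
split; first exact: Omega_concat.
exists (fun s t => concat i0 (H1 s) (H2 s) t); split.
  apply: (concat_cont c1 c2 (x0 := x0)).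
  - by move=> s t hs ht h1; apply: b1 => //; split => //; exists i0; right.
  - by move=> s t hs ht h1; apply: b2 => //; split => //; exists i0; left.
split.
  move=> t ht; split.
    rewrite (@concat_ext _ _ (fun _ => x0) (fun _ => x0)) //.
    - by rewrite /concat; case: ifP.
    - by move=> u hu; case: (e1 u hu).
    - by move=> u hu; case: (e2 u hu).
  apply: concat_ext => //.
  - by move=> u hu; case: (e1 u hu).
  - by move=> u hu; case: (e2 u hu).
move=> s t hs ht; apply: concat_bdry => // u hu; [exact: b1 | exact: b2].
Qed.

Lemma mu_concat (al be al' be' : pt R n -> X) :
  (mu_unif d (concat i0 al al') (concat i0 be be') <=
   maxe (mu_unif d al be) (mu_unif d al' be'))%E.
Proof.
apply: ge_ereal_sup => _ [t ht <-]; rewrite /concat; case: ifP => c.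
  rewrite le_max; apply/orP; left; apply: ereal_sup_ubound.
  by exists (setc t i0 (2 * t i0)) => //; apply: setc_cube (branch1 ht c).
rewrite le_max; apply/orP; right; apply: ereal_sup_ubound.
by exists (setc t i0 (2 * t i0 - 1)) => //; apply: setc_cube (branch2 ht (negbT c)).
Qed.

End Cont.
End Geo.

Unset Implicit Arguments.
Local Open Scope ereal_scope.

Theorem lemma4p4 (R : realType) (X : Type) (d : X -> X -> R)
  (hd : is_metric d) (x0 : X) (n : nat) (hn : (0 < n)%N)
  (a b : set (('I_n -> R) -> X)) :
  hgrp d x0 a -> hgrp d x0 b ->
  rho_pi d (hgrp_mul d x0 (Ordinal hn) a b) (hgrp_e d (n:=n) x0) <=
    maxe (rho_pi d a (hgrp_e d (n:=n) x0)) (rho_pi d b (hgrp_e d (n:=n) x0)).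
Proof.
move=> [al0 _ ->] [be0 _ ->].
apply: inf_max => _ _ [al ha [be hb <-]] [al' ha' [be' hb' <-]].
apply: le_trans (@mu_concat R n X d (Ordinal hn) al be al' be').
apply: ge_ereal_inf.
exists (mu_unif d (concat (Ordinal hn) al al') (concat (Ordinal hn) be be')) => //.
exists (concat (Ordinal hn) al al').
  exists al, al'; split => //; split => //; split.
    exact: (Omega_concat hd (Ordinal hn) (proj1 ha) (proj1 ha')).
  apply: homotopic_refl.
  exact: (Omega_concat hd (Ordinal hn) (proj1 ha) (proj1 ha')).
exists (concat (Ordinal hn) be be') => //.
exact: (e_concat hd (Ordinal hn) hb hb').
Qed.
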